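(* Let $n \geq 2$ and $d_1,d_2 \geq 1$ be integers, let $\mathcal{X}_1, \mathcal{X}_2$ be vector spaces over a field $\mathbb{F}$, and for each $a \in \{1,\dots,n\}$ let $x_{a,1} \in \mathcal{X}_1$ and $x_{a,2} \in \mathcal{X}_2$ be non-zero vectors. Suppose that for each $j \in \{1,2\}$, $$\dim\operatorname{span}\{x_{a,j} : a \in \{1,\dots,n\}\}\geq d_j.$$ If $n+1 \leq d_1+d_2$, then $$\sum_{a =1}^n x_{a,1}\otimes x_{a,2}\neq 0.$$ *)

(* Defs.v *)
From HB Require Import structures.
From mathcomp Require Import all_boot all_order all_algebra.
Set Implicit Arguments. Unset Strict Implicit. Unset Printing Implicit Defensive.
Import Order.TTheory GRing.Theory Num.Theory.
Local Open Scope ring_scope.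

Definition in_span (F : fieldType) (X : lmodType F) (n : nat)
    (x : 'I_n -> X) (v : X) : Prop :=
  exists c : 'I_n -> F, v = \sum_(a < n) c a *: x a.

Definition lin_indep (F : fieldType) (X : lmodType F) (k : nat)
    (v : 'I_k -> X) : Prop :=
  forall c : 'I_k -> F, \sum_(i < k) c i *: v i = 0 -> forall i, c i = 0.

Definition span_dim_ge (F : fieldType) (X : lmodType F) (n : nat)
    (x : 'I_n -> X) (d : nat) : Prop :=
  exists v : 'I_d -> X, (forall i, in_span x (v i)) /\ lin_indep v.

Definition bilinear_map (F : fieldType) (X1 X2 W : lmodType F)
    (B : X1 -> X2 -> W) : Prop :=
  (forall (c : F) (u u' : X1) (w : X2), B (c *: u + u') w = c *: B u w + B u' w) /\
  (forall (c : F) (u : X1) (w w' : X2), B u (c *: w + w') = c *: B u w + B u w').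

(* Defined through the
   universal property of the tensor product: an element of X1 (x) X2 is zero iff
   it is killed by (the linear map induced by) every bilinear map out of X1 x X2. *)
Definition tensor_sum_eq0 (F : fieldType) (X1 X2 : lmodType F) (n : nat)
    (x1 : 'I_n -> X1) (x2 : 'I_n -> X2) : Prop :=
  forall (W : lmodType F) (B : X1 -> X2 -> W),
    bilinear_map B -> \sum_(a < n) B (x1 a) (x2 a) = 0.

(* Main.v *)
Require Import Defs.
From HB Require Import structures.
From mathcomp Require Import all_boot all_order all_algebra.
From mathcomp Require Import boolp classical_sets zify.
Import Order.TTheory GRing.Theory Num.Theory.
Local Open Scope ring_scope.

Local Open Scope classical_set_scope.
Section Ext.
Variables (F : fieldType) (X : lmodType F).

Definition glin (G : set (X * F)) := forall c u s v t,
  G (u, s) -> G (v, t) -> G (c *: u + v, c * s + t).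
Definition gfun (G : set (X * F)) := forall u s t, G (u, s) -> G (u, t) -> s = t.

Lemma ext_functional (G0 : set (X * F)) : G0 (0, 0) -> glin G0 -> gfun G0 ->
  exists phi : X -> F, (forall c u v, phi (c *: u + v) = c * phi u + phi v) /\
    (forall u s, G0 (u, s) -> phi u = s).
Proof.
move=> G00 lin0 fun0.
pose P (A : set (X * F)) := glin (A `|` G0) /\ gfun (A `|` G0).
have [A [[linA funA] maxA]] : exists A, P A /\ forall B, A `<` B -> ~ P B.
  apply: Zorn_bigcup => Fa FP tot.
  have key : forall p q, ((\bigcup_(Y in Fa) Y) `|` G0) p ->
     ((\bigcup_(Y in Fa) Y) `|` G0) q ->
     (forall Z, Fa Z \/ Z = set0 -> (Z `|` G0) p -> (Z `|` G0) q -> P Z -> False) -> False.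
    move=> p q [[Y FY Yp]|G0p] [[Z FZ Zq]|G0q] H.
    - have [YZ|ZY] := tot _ _ FY FZ.
      + by apply: (H Z (or_introl FZ)); [left; apply: YZ|left|apply: FP].
      + by apply: (H Y (or_introl FY)); [left|left; apply: ZY|apply: FP].
    - by apply: (H Y (or_introl FY)); [left|right|apply: FP].
    - by apply: (H Z (or_introl FZ)); [right|left|apply: FP].
    - apply: (H set0 (or_intror erefl)); [right|right|]=> //.
      by rewrite /P set0U.
  split.
  - move=> c u s v t Hu Hv; apply: contrapT => Hn.
    apply: (key _ _ Hu Hv) => Z [FZ|->] HZu HZv [linZ _].
      have := linZ c u s v t HZu HZv; case=> [Zp|G0p]; apply: Hn.
        by left; exists Z.
      by right.
    have := linZ c u s v t HZu HZv; case=> [//|G0p]; apply: Hn; by right.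
  - move=> u s t Hu Hv; apply: contrapT => Hn.
    by apply: (key _ _ Hu Hv) => Z _ HZu HZv [_ funZ]; apply: Hn; apply: funZ HZu HZv.
pose G := A `|` G0.
have tot : forall u, exists s, G (u, s).
  move=> u; apply: contrapT => Hn.
  pose B (p : X * F) := exists v s t, G (v, s) /\ p = (v + t *: u, s).
  have GB : G `<=` B by case=> v s Gv; exists v, s, 0; rewrite scale0r addr0.
  have BG : B `|` G0 = B.
    by apply/seteqP; split=> p; [case=> //; move=> ?; apply: GB; right|left].
  apply: (maxA B).
    split; first by move=> p Ap; apply: GB; left.
    move=> BA; have : B (u, 0).
      by exists 0, 0, 1; split; [right|rewrite scale1r add0r].
    move=> /BA Au; apply: Hn; exists 0; by left.
  rewrite /P BG; split.
  - move=> c _ _ _ _ [v [s [t [Gv [-> ->]]]]] [v' [s' [t' [Gv' [-> ->]]]]].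
    exists (c *: v + v'), (c * s + s'), (c * t + t'); split; first exact: linA.
    congr (_, _); rewrite scalerDr scalerA scalerDl; by rewrite addrACA.
  - move=> w _ _ [v [s [t [Gv [-> ->]]]]] [v' [s' [t' [Gv' [E ->]]]]].
    have [tt'|tt'] := eqVneq t t'.
      move: E; rewrite tt' => /addIr E; rewrite E in Gv; exact: funA Gv Gv'.
    exfalso; apply: Hn.
    have G00' : G (0, 0) by right.
    have := linA ((t - t')^-1) _ _ _ _ (linA (-1) _ _ _ _ Gv Gv') G00'.
    set r := (_ * _ + _)%R => Gu; exists r.
    suff -> : u = (t - t')^-1 *: ((-1) *: v + v') + 0 by [].
    have -> : (-1) *: v + v' = (t - t') *: u.
      have E' : v' = v + t *: u - t' *: u by rewrite E addrK.
      by rewrite scaleN1r scalerBl E' addrA addKr.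
    by rewrite addr0 scalerA mulVf ?scale1r // subr_eq0.
have [phi Hphi] := choice tot.
exists phi; split.
  move=> c u v; apply: funA (Hphi _) _.
  exact: linA (Hphi u) (Hphi v).
by move=> u s G0u; apply: funA (Hphi u) _; right.
Qed.

Lemma phi0 (phi : X -> F) : (forall c u v, phi (c *: u + v) = c * phi u + phi v) ->
  phi 0 = 0.
Proof.
move=> H; have := H 1 0 0; rewrite scale1r addr0 mul1r => E.
by apply: (@addrI _ (phi 0)); rewrite addr0 -E.
Qed.

Lemma phi_sum (phi : X -> F) n (c : 'I_n -> F) (x : 'I_n -> X) :
  (forall c u v, phi (c *: u + v) = c * phi u + phi v) ->
  phi (\sum_(a < n) c a *: x a) = \sum_(a < n) c a * phi (x a).
Proof.
move=> H; apply: (big_ind2 (fun v s => phi v = s)).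
- exact: phi0.
- by move=> p ? q ? <- <-; have := H 1 p q; rewrite scale1r mul1r.
- by move=> a _; rewrite -[_ *: _]addr0 H phi0 // addr0.
Qed.

Lemma indep_dual k (v : 'I_k -> X) : lin_indep v -> forall j : 'I_k,
  exists phi : X -> F, (forall c u w, phi (c *: u + w) = c * phi u + phi w) /\
    (forall i, phi (v i) = (i == j)%:R).
Proof.
move=> Hind j.
pose G0 (p : X * F) := exists t : 'I_k -> F, p = (\sum_(i < k) t i *: v i, t j).
have [|||phi [Hl H0]] := @ext_functional G0.
- by exists (fun _ => 0); rewrite big1 // => i _; rewrite scale0r.
- move=> c _ _ _ _ [t [-> ->]] [t' [-> ->]].
  exists (fun i => c * t i + t' i); congr (_, _).
  rewrite scaler_sumr -big_split /=; apply: eq_bigr => i _.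
  by rewrite scalerDl scalerA.
- move=> _ _ _ [t [-> ->]] [t' [E ->]].
  apply/eqP; rewrite -subr_eq0; apply/eqP.
  apply: (Hind (fun i => t i - t' i)).
  by rewrite (eq_bigr (fun i => t i *: v i - t' i *: v i)) ?sumrB ?E ?subrr //
    => i _; rewrite scalerBl.
- exists phi; split=> // i; apply: H0.
  exists (fun l => (l == i)%:R).
  rewrite (bigD1 i) //= eqxx scale1r big1 ?addr0 ?(eq_sym j) //.
  by move=> l /negbTE ->; rewrite scale0r.
Qed.
End Ext.

Theorem proposition1 (F : fieldType) (X1 X2 : lmodType F) (n d1 d2 : nat)
    (x1 : 'I_n -> X1) (x2 : 'I_n -> X2) :
  (2 <= n)%N -> (1 <= d1)%N -> (1 <= d2)%N ->
  (forall a, x1 a != 0) -> (forall a, x2 a != 0) ->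
  span_dim_ge x1 d1 -> span_dim_ge x2 d2 ->
  (n.+1 <= d1 + d2)%N ->
  ~ tensor_sum_eq0 x1 x2.
Proof.
move=> _ _ _ _ _ [v1 [sp1 ind1]] [v2 [sp2 ind2]] Hd Ht.
have [phi Hphi] := choice (@indep_dual _ _ _ _ ind1).
have [psi Hpsi] := choice (@indep_dual _ _ _ _ ind2).
have [C1 HC1] := choice sp1.
have [C2 HC2] := choice sp2.
pose A := \matrix_(j < d1, a < n) phi j (x1 a).
pose P := \matrix_(k < d2, a < n) psi k (x2 a).
pose M1 := \matrix_(i < d1, a < n) C1 i a.
pose M2 := \matrix_(i < d2, a < n) C2 i a.
have E1 : M1 *m A^T = 1%:M.
  apply/matrixP => i j; rewrite !mxE.
  rewrite (eq_bigr (fun a => C1 i a * phi j (x1 a))); last by move=> a _; rewrite !mxE.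
  by rewrite -(@phi_sum _ _ _ _ _ _ (proj1 (Hphi j))) -(HC1 i) (proj2 (Hphi j)) eq_sym.
have E2 : M2 *m P^T = 1%:M.
  apply/matrixP => i j; rewrite !mxE.
  rewrite (eq_bigr (fun a => C2 i a * psi j (x2 a))); last by move=> a _; rewrite !mxE.
  by rewrite -(@phi_sum _ _ _ _ _ _ (proj1 (Hpsi j))) -(HC2 i) (proj2 (Hpsi j)) eq_sym.
have E0 : P *m A^T = 0.
  apply/matrixP => k j; rewrite !mxE.
  pose B (u : X1) (w : X2) : F^o := phi j u * psi k w.
  have bil : bilinear_map B.
    split => c u u' w; rewrite /B.
      by rewrite (proj1 (Hphi j)) mulrDl -mulrA.
    by rewrite (proj1 (Hpsi k) c u' w) mulrDr mulrCA.
  have H0 := Ht _ B bil; rewrite /B in H0.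
  transitivity (\sum_(a < n) phi j (x1 a) * psi k (x2 a)); last exact: H0.
  by apply: eq_bigr => a _; rewrite !mxE mulrC.
have r1 : (d1 <= \rank A)%N.
  by have := mxrankM_maxr M1 A^T; rewrite E1 mxrank1 mxrank_tr.
have r2 : (d2 <= \rank P)%N.
  by have := mxrankM_maxr M2 P^T; rewrite E2 mxrank1 mxrank_tr.
have : (\rank P <= n - \rank A^T)%N.
  by rewrite -mxrank_ker mxrankS //; apply/sub_kermxP.
have := rank_leq_col A; rewrite mxrank_tr; lia.
Qed.
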